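(* Let $G_1,G_2$ be finite, noncomplete, nonempty (i.e. having at least one edge), undirected, simple graphs with disjoint vertex sets, and let $n_1=|V(G_1)|$. If $G_1$ is regular, then $\vartheta(G_1\,\mathrm{NS}\,G_2)=n_1+\vartheta(G_2)$ and $\vartheta(G_1\,\mathrm{NNS}\,G_2)=n_1+\vartheta(G_2)$. If moreover $\alpha(G_2)=\vartheta(G_2)$, then $\alpha(G_1\,\mathrm{NS}\,G_2)=n_1+\alpha(G_2)$ and $\alpha(G_1\,\mathrm{NNS}\,G_2)=n_1+\alpha(G_2)$.
   Context: Let $V(G_1)=\{v_1,\dots,v_{n_1}\}$ and let $G_1\vee G_2$ be the disjoint union of $G_1,G_2$ plus all edges between $V(G_1)$ and $V(G_2)$. $G_1\,\mathrm{NS}\,G_2$ is obtained from $G_1\vee G_2$ by adding new vertices $v'_1,\dots,v'_{n_1}$ and joining $v'_i$ to $v_j$ iff $\{v_i,v_j\}\in E(G_1)$. $G_1\,\mathrm{NNS}\,G_2$ is obtained from $G_1\vee G_2$ by adding new vertices $v'_1,\dots,v'_{n_1}$ and joining $v'_i$ to $v_j$, $i\ne j$, iff $\{v_i,v_j\}\notin E(G_1)$. $\alpha$ is the independence number; $\vartheta(G)$ is the Lovász theta function: the maximum of $\mathrm{Tr}(BJ)$ over positive semidefinite $B$ indexed by $V(G)$ with $\mathrm{Tr}B=1$ and $B_{i,j}=0$ for $\{i,j\}\in E(G)$, $J$ the all-ones matrix. *)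

(* Defs.v *)
From HB Require Import structures.
From mathcomp Require Import all_boot all_order all_algebra.
From mathcomp Require Import boolp classical_sets reals.
Set Implicit Arguments. Unset Strict Implicit. Unset Printing Implicit Defensive.
Import Order.TTheory GRing.Theory Num.Theory.
Local Open Scope ring_scope.
Local Open Scope classical_set_scope.

Definition simple_graph (V : finType) (e : rel V) : Prop :=
  symmetric e /\ irreflexive e.

Definition noncomplete (V : finType) (e : rel V) : Prop :=
  exists u v : V, u != v /\ ~~ e u v.

Definition has_edge (V : finType) (e : rel V) : Prop :=
  exists u v : V, e u v.

Definition regular (V : finType) (e : rel V) : Prop :=
  exists k : nat, forall v : V, #|[set u | e v u]| = k.

Definition independent (V : finType) (e : rel V) (S : {set V}) : bool :=
  [forall u in S, forall v in S, ~~ e u v].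

Definition alpha (V : finType) (e : rel V) : nat :=
  \max_(S : {set V} | independent e S) #|S|.

Definition psd (R : realType) (V : finType) (B : V -> V -> R) : Prop :=
  (forall i j, B i j = B j i) /\
  (forall x : V -> R, 0 <= \sum_i \sum_j x i * B i j * x j).

(* Lovász theta: max of Tr(BJ) = sum of all entries, over PSD B with
   Tr B = 1 and B_ij = 0 on edges (the max is attained, so we take sup). *)
Definition theta_values (R : realType) (V : finType) (e : rel V) : set R :=
  [set t | exists B : V -> V -> R,
     [/\ psd B, \sum_i B i i = 1, (forall i j, e i j -> B i j = 0)
       & t = \sum_i \sum_j B i j]].

Definition theta (R : realType) (V : finType) (e : rel V) : R :=
  sup (@theta_values R V e).

(* Vertex set of G1 NS G2 / G1 NNS G2: (V1 + V2) + V1, where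
   inl (inl v_i) = v_i, inl (inr w) = w in G2, inr v_i = v'_i. *)
Definition NS_rel (V1 V2 : finType) (e1 : rel V1) (e2 : rel V2)
  (x y : (V1 + V2) + V1) : bool :=
  match x, y with
  | inl (inl a), inl (inl b) => e1 a b
  | inl (inr a), inl (inr b) => e2 a b
  | inl (inl _), inl (inr _) => true
  | inl (inr _), inl (inl _) => true
  | inr i, inl (inl j) => e1 i j
  | inl (inl j), inr i => e1 i j
  | _, _ => false
  end.

Definition NNS_rel (V1 V2 : finType) (e1 : rel V1) (e2 : rel V2)
  (x y : (V1 + V2) + V1) : bool :=
  match x, y with
  | inl (inl a), inl (inl b) => e1 a b
  | inl (inr a), inl (inr b) => e2 a b
  | inl (inl _), inl (inr _) => true
  | inl (inr _), inl (inl _) => true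
  | inr i, inl (inl j) => (i != j) && ~~ e1 i j
  | inl (inl j), inr i => (i != j) && ~~ e1 i j
  | _, _ => false
  end.

(* Main.v *)
Require Import Defs.
From HB Require Import structures.
From mathcomp Require Import all_boot all_order all_algebra.
From mathcomp Require Import boolp classical_sets reals.
From mathcomp Require Import ring lra.
Import Order.TTheory GRing.Theory Num.Theory.
Local Open Scope ring_scope.
Set Implicit Arguments. Unset Strict Implicit. Unset Printing Implicit Defensive.

Lemma sum_delta (R : realType) (T : finType) (x : T) (F : T -> R) :
  \sum_i (i == x)%:R * F i = F x.
Proof.
rewrite (bigD1 x) //= eqxx mul1r big1 ?addr0 // => i /negPf ->; by rewrite mul0r.
Qed.

Section Bil.
Variables (R : realType) (T : finType) (B : T -> T -> R).
Hypothesis symB : forall i j, B i j = B j i.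
Hypothesis psdB : forall x : T -> R, 0 <= \sum_i \sum_j x i * B i j * x j.

Definition bil (u v : {ffun T -> R}) := \sum_i \sum_j u i * B i j * v j.
Definition qf u := bil u u.
Definition sc (c : R) (u : {ffun T -> R}) : {ffun T -> R} := [ffun x => c * u x].
Definition dl (x : T) : {ffun T -> R} := [ffun y => (y == x)%:R].

Lemma qf_ge0 u : 0 <= qf u.
Proof. exact: (psdB (fun i => u i)). Qed.

Lemma bilDl u v w : bil (u + v) w = bil u w + bil v w.
Proof.
rewrite /bil -big_split; apply: eq_bigr => i _; rewrite -big_split.
by apply: eq_bigr => j _; rewrite !ffunE !mulrDl.
Qed.

Lemma bilZl (c : R) (u w : {ffun T -> R}) : bil (sc c u) w = c * bil u w.
Proof.
rewrite /bil mulr_sumr; apply: eq_bigr => i _; rewrite mulr_sumr.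
by apply: eq_bigr => j _; rewrite !ffunE !mulrA.
Qed.

Lemma bilC u v : bil u v = bil v u.
Proof.
rewrite /bil exchange_big; apply: eq_bigr => i _; apply: eq_bigr => j _.
rewrite (symB j i); ring.
Qed.

Lemma bilDr u v w : bil w (u + v) = bil w u + bil w v.
Proof. by rewrite bilC bilDl !(bilC w). Qed.

Lemma bilZr (c : R) (u w : {ffun T -> R}) : bil w (sc c u) = c * bil w u.
Proof. by rewrite bilC bilZl bilC. Qed.

Lemma bilNl (u w : {ffun T -> R}) : bil (- u) w = - bil u w.
Proof.
rewrite /bil -sumrN; apply: eq_bigr => i _; rewrite -sumrN.
by apply: eq_bigr => j _; rewrite !ffunE !mulNr.
Qed.

Lemma bilNr (u w : {ffun T -> R}) : bil w (- u) = - bil w u.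
Proof. by rewrite bilC bilNl bilC. Qed.

Lemma bil0l w : bil 0 w = 0.
Proof. by rewrite /bil big1 // => i _; rewrite big1 // => j _; rewrite ffunE !mul0r. Qed.

Lemma bil_sumr (I : Type) (s : seq I) (f : I -> {ffun T -> R}) u :
  bil u (\sum_(p <- s) f p) = \sum_(p <- s) bil u (f p).
Proof.
elim: s => [|a s IH]; first by rewrite !big_nil bilC bil0l.
by rewrite !big_cons bilDr IH.
Qed.

Lemma bil_dl x y : bil (dl x) (dl y) = B x y.
Proof.
rewrite /bil (eq_bigr (fun i => (i == x)%:R * \sum_j B i j * (j == y)%:R)).
  rewrite sum_delta (eq_bigr (fun j => (j == y)%:R * B x j)) ?sum_delta //.
  by move=> j _; rewrite mulrC.
move=> i _; rewrite mulr_sumr; apply: eq_bigr => j _; rewrite !ffunE; ring.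
Qed.

Lemma qfD u v : qf (u + v) = qf u + 2 * bil u v + qf v.
Proof. rewrite /qf bilDl !bilDr (bilC v u); ring. Qed.

Lemma cs2 (c : R) (u v : {ffun T -> R}) : 0 < c -> 2 * bil u v <= c * qf u + qf v / c.
Proof.
move=> c0; have := qf_ge0 (sc c u - v).
rewrite qfD /qf bilNl !bilNr opprK !bilZl !bilZr => h.
rewrite -(ler_pM2l c0).
have -> : c * (c * bil u u + bil v v / c) = c * (c * bil u u) + bil v v.
  by field; rewrite lt0r_neq0.
lra.
Qed.

Lemma conv_seq (I : Type) (s : seq I) (f : I -> {ffun T -> R}) :
  qf (\sum_(p <- s) f p) <= (size s)%:R * \sum_(p <- s) qf (f p).
Proof.
elim: s => [|a s IH]; first by rewrite !big_nil /qf bil0l mul0r.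
rewrite !big_cons /= qfD.
set F := \sum_(p <- s) f p; set S := \sum_(p <- s) qf (f p).
have S0 : 0 <= S by rewrite /S sumr_ge0 // => p _; exact: qf_ge0.
case: s IH @F @S S0 => [|b s] IH F S S0.
  rewrite /F /S !big_nil /= /qf bilC !bil0l; lra.
set N : R := (size (b :: s))%:R.
have N0 : 0 < N by rewrite /N ltr0n.
have h := cs2 (f a) F N0.
have hF : qf F / N <= S.
  by rewrite ler_pdivrMr // mulrC.
have hqa := qf_ge0 (f a).
rewrite [size _]/= -[(size s).+2%:R]/((size (b :: s)).+1%:R) -/N.
rewrite -natr1 -/N.
have : qf F <= N * S by [].
nra.
Qed.
Lemma conv_fin (I : finType) (P : pred I) (f : I -> {ffun T -> R}) :
  qf (\sum_(p | P p) f p) <= #|P|%:R * \sum_(p | P p) qf (f p).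
Proof.
rewrite -big_filter -[X in _ * X]big_filter deprecated_filter_index_enum cardE.
exact: conv_seq.
Qed.

Lemma qf_dl x : qf (dl x) = B x x.
Proof. exact: bil_dl. Qed.

Lemma qf_sc c u : qf (sc c u) = c ^+ 2 * qf u.
Proof. by rewrite /qf bilZl bilZr expr2 mulrA. Qed.

Lemma cs_bil u v : 0 < qf v -> bil u v ^+ 2 <= qf u * qf v.
Proof.
move=> qv.
have := qf_ge0 (sc (qf v) u - sc (bil u v) v).
rewrite qfD /qf !bilNr !bilNl opprK !bilZl !bilZr => h.
rewrite -subr_ge0 -(pmulr_rge0 _ qv).
rewrite /qf in qv *; nra.
Qed.

Definition ones : {ffun T -> R} := [ffun => 1].

Lemma ones_sum : ones = \sum_x dl x.
Proof.
apply/ffunP => y; rewrite sum_ffunE !ffunE.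
rewrite (eq_bigr (fun x => (x == y)%:R * 1)) ?sum_delta // => x _.
by rewrite !ffunE mulr1 eq_sym.
Qed.

Lemma val_ones : \sum_i \sum_j B i j = qf ones.
Proof.
by apply: eq_bigr => i _; apply: eq_bigr => j _; rewrite !ffunE mul1r mulr1.
Qed.

Lemma val_le_trace : \sum_i \sum_j B i j <= #|T|%:R * \sum_i B i i.
Proof.
rewrite val_ones ones_sum.
have h := conv_fin predT dl.
rewrite (eq_bigr (fun x => B x x)) in h; last by move=> x _; exact: qf_dl.
exact: h.
Qed.
End Bil.

Lemma sum_prod (R : realType) (I J : finType) (f : I -> R) (g : J -> R) (c : R) :
  \sum_a \sum_b f a * g b * c = c * (\sum_a f a) * (\sum_b g b).
Proof.
rewrite -mulrA mulr_suml mulr_sumr; apply: eq_bigr => a _.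
rewrite mulr_sumr mulr_sumr; apply: eq_bigr => b _; ring.
Qed.

Lemma sum_ind (R : realType) (T : finType) (S : {set T}) (F : T -> R) :
  \sum_i (i \in S)%:R * F i = \sum_(i in S) F i.
Proof.
rewrite [RHS]big_mkcond; apply: eq_bigr => i _; case: (i \in S) => /=.
  by rewrite mul1r. by rewrite mul0r.
Qed.

Section Theta.
Local Open Scope classical_set_scope.
Variables (R : realType) (V : finType) (e : rel V).

Lemma vals_ub : has_ubound (@theta_values R V e).
Proof.
exists #|V|%:R => t [B [[sB pB] tr _ ->]].
have := val_le_trace sB pB; by rewrite tr mulr1.
Qed.

Lemma theta_ge t : @theta_values R V e t -> t <= theta R e.
Proof. move=> h; exact: (ub_le_sup vals_ub). Qed.

Lemma theta_le c : @theta_values R V e !=set0 ->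
  (forall t, @theta_values R V e t -> t <= c) -> theta R e <= c.
Proof. by move=> ne h; apply: ge_sup. Qed.

Lemma vals_id : (0 < #|V|)%N -> irreflexive e -> @theta_values R V e 1.
Proof.
move=> n0 irr.
have nz : (#|V|%:R : R) != 0 by rewrite pnatr_eq0 -lt0n.
exists (fun i j => (i == j)%:R / #|V|%:R); split.
- split => [i j|x]; first by rewrite eq_sym.
  apply: sumr_ge0 => i _.
  rewrite (eq_bigr (fun j => (j == i)%:R * (x i * x j / #|V|%:R))).
    rewrite sum_delta; apply: divr_ge0 => //; by rewrite -expr2 sqr_ge0.
  by move=> j _; rewrite (eq_sym i j); case: (j == i); rewrite /= ?mul1r ?mul0r //; ring.
- rewrite (eq_bigr (fun _ => 1 / #|V|%:R)); last by move=> i _; rewrite eqxx.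
  by rewrite sumr_const -[_ *+ _]mulr_natl mulrCA divff // mulr1.
- by move=> i j eij; case: eqP eij => [->|]; rewrite ?irr // mul0r.
- rewrite (eq_bigr (fun _ => 1 / #|V|%:R)).
    by rewrite sumr_const -[_ *+ _]mulr_natl mulrCA divff // mulr1.
  move=> i _; rewrite (eq_bigr (fun j => (j == i)%:R * (1 / #|V|%:R))) ?sum_delta //.
  by move=> j _; rewrite eq_sym mul1r.
Qed.


Lemma alpha_le_theta : (0 < #|V|)%N -> irreflexive e -> (alpha e)%:R <= theta R e.
Proof.
move=> n0 irr.
have h1 : 1 <= theta R e by apply: theta_ge; exact: vals_id.
have [S0 iS0 ->] : {S0 | independent e S0 & alpha e = #|S0|}.
  rewrite /alpha; apply: eq_bigmax_cond; apply/card_gt0P; exists (finset.set0 : {set V}).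
  by rewrite unfold_in /independent; apply/forall_inP => u; rewrite inE.
case: (posnP #|S0|) => [->|sp]; first by rewrite (le_trans _ h1) // ler01.
have nz : (#|S0|%:R : R) != 0 by rewrite pnatr_eq0 -lt0n.
have cS : \sum_i (i \in S0)%:R = #|S0|%:R :> R.
  rewrite (eq_bigr (fun i => (i \in S0)%:R * 1)) ?sum_ind ?sumr_const //.
  by move=> i _; rewrite mulr1.
apply: theta_ge.
exists (fun i j => (i \in S0)%:R * (j \in S0)%:R / #|S0|%:R); split.
- split => [i j|x]; first by rewrite [_ * (j \in S0)%:R]mulrC.
  rewrite (eq_bigr (fun i => \sum_j ((i \in S0)%:R * x i) * ((j \in S0)%:R * x j) * #|S0|%:R^-1)).
    rewrite sum_prod -mulrA -expr2; apply: mulr_ge0; last by rewrite sqr_ge0.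
    by rewrite invr_ge0 ler0n.
  by move=> i _; apply: eq_bigr => j _; ring.
- rewrite (eq_bigr (fun i => (i \in S0)%:R * (1 / #|S0|%:R))).
    by rewrite sum_ind sumr_const -[_ *+ _]mulr_natl mulrCA divff // mulr1.
  by move=> i _; case: (i \in S0); rewrite /= ?mul1r ?mul0r.
- move=> i j eij; case Si: (i \in S0); case Sj: (j \in S0); rewrite /= ?mul0r ?mulr0 ?mul0r //.
  by move: iS0 => /forall_inP /(_ i Si) /forall_inP /(_ j Sj); rewrite eij.
- rewrite (sum_prod (fun i => (i \in S0)%:R) (fun j => (j \in S0)%:R)) cS.
  field; exact: nz.
Qed.

End Theta.


Lemma bil_wsums (R : realType) (T : finType) (B : T -> T -> R) (sB : forall i j, B i j = B j i)
  (I J : finType) (f : I -> R) (g : I -> T) (f' : J -> R) (g' : J -> T) :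
  bil B (\sum_a sc (f a) (dl R (g a))) (\sum_b sc (f' b) (dl R (g' b))) =
  \sum_a \sum_b f a * B (g a) (g' b) * f' b.
Proof.
rewrite (bil_sumr sB) [RHS]exchange_big; apply: eq_bigr => b _.
rewrite (bilZr sB) (bilC sB) (bil_sumr sB) mulr_sumr; apply: eq_bigr => a _.
rewrite (bilZr sB) bil_dl sB; ring.
Qed.

Lemma sc1 (R : realType) (T : finType) (u : {ffun T -> R}) : sc 1 u = u.
Proof. by apply/ffunP => x; rewrite ffunE mul1r. Qed.

Lemma bil_sums (R : realType) (T : finType) (B : T -> T -> R) (sB : forall i j, B i j = B j i)
  (I J : finType) (g : I -> T) (g' : J -> T) :
  bil B (\sum_a dl R (g a)) (\sum_b dl R (g' b)) = \sum_a \sum_b B (g a) (g' b).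
Proof.
have := bil_wsums sB (fun _ => 1) g (fun _ => 1) g'.
under eq_bigr do rewrite sc1. under [X in bil _ _ X]eq_bigr do rewrite sc1.
move=> ->; apply: eq_bigr => a _; apply: eq_bigr => b _; ring.
Qed.

Lemma qf_mulrn (R : realType) (T : finType) (B : T -> T -> R) (sB : forall i j, B i j = B j i) (u : {ffun T -> R}) k :
  qf B (u *+ k) = k%:R ^+ 2 * qf B u.
Proof.
have -> : u *+ k = sc k%:R u by apply/ffunP => x; rewrite ffunMnE ffunE mulr_natl.
exact: (qf_sc sB).
Qed.

Lemma exch_dep (M : zmodType) (I : finType) (P : I -> I -> bool) (G : I -> I -> M) :
  \sum_a \sum_(b | P a b) G a b = \sum_b \sum_(a | P a b) G a b.
Proof. by rewrite (exchange_big_dep xpredT). Qed.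

Lemma pair_dep (M : zmodType) (I : finType) (P : I -> I -> bool) (G : I -> I -> M) :
  \sum_(p | P p.1 p.2) G p.1 p.2 = \sum_a \sum_(b | P a b) G a b.
Proof. by rewrite pair_big_dep. Qed.

Lemma sum_constP (M : zmodType) (I : finType) (Q : pred I) (x : M) :
  \sum_(b | Q b) x = x *+ #|[set b | Q b]|.
Proof. by rewrite -sumr_const; apply: eq_bigl => b; rewrite inE. Qed.


Section G.
Variables (R : realType) (V1 V2 : finType).
Local Notation T := ((V1 + V2) + V1)%type.

Lemma sumT3 (M : zmodType) (F : T -> M) :
  \sum_x F x = \sum_i F (inl (inl i)) + \sum_a F (inl (inr a)) + \sum_i F (inr i).
Proof. by rewrite big_sumType /= big_sumType. Qed.

Lemma theta_upper (r : rel T) (e2 : rel V2) (k : nat) :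
 (0 < k)%N -> (0 < #|V1|)%N -> (0 < #|V2|)%N -> irreflexive e2 ->
 (forall i a, r (inl (inl i)) (inl (inr a))) ->
 (forall a b, r (inl (inr a)) (inl (inr b)) = e2 a b) ->
 (forall i, #|[set j | r (inl (inl i)) (inr j)]| = k) ->
 (forall j, #|[set i | r (inl (inl i)) (inr j)]| = k) ->
 forall t, @theta_values R T r t -> t <= #|V1|%:R + theta R e2.
Proof.
move=> k0 n0 n20 irr2 hX hE2 cR cL t [B [[sB pB] tr z ->]].
set n : R := #|V1|%:R. set m := theta R e2.
have m1 : 1 <= m := theta_ge (vals_id R n20 irr2).
have np : 0 < n by rewrite ltr0n.
pose X := \sum_i dl R (inl (inl i) : T).
pose W := \sum_a dl R (inl (inr a) : T).
pose Y := \sum_i dl R (inr i : T).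
set tX := \sum_i B (inl (inl i)) (inl (inl i)).
set tW := \sum_a B (inl (inr a)) (inl (inr a)).
set tY := \sum_i B (inr i) (inr i).
have trE : tX + tW + tY = 1 by rewrite -tr sumT3.
have diag x : 0 <= B x x by rewrite -(qf_dl B x) qf_ge0.
have tX0 : 0 <= tX by apply: sumr_ge0.
have tW0 : 0 <= tW by apply: sumr_ge0.
have tY0 : 0 <= tY by apply: sumr_ge0.
have onesE : ones R T = X + Y + W by rewrite ones_sum sumT3 addrAC.
have bXW : bil B X W = 0.
  rewrite bil_sums //; apply: big1 => i _; apply: big1 => a _; exact: z.
have hY : qf B Y <= n * tY.
  have h := conv_fin sB pB predT (fun i => dl R (inr i : T)).
  rewrite (eq_bigr (fun i => B (inr i) (inr i))) in h; last by move=> i _; exact: qf_dl.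
  exact: h.
have hW' : qf B W <= #|V2|%:R * tW.
  have h := conv_fin sB pB predT (fun i => dl R (inl (inr i) : T)).
  rewrite (eq_bigr (fun i => B (inl (inr i)) (inl (inr i)))) in h; last by move=> i _; exact: qf_dl.
  exact: h.
have qWE : qf B W = \sum_a \sum_b B (inl (inr a)) (inl (inr b)) by rewrite /qf bil_sums.
have hW : qf B W <= m * tW.
  case: (eqVneq tW 0) => [tW0'|tWn0].
    by rewrite tW0' mulr0; move: hW'; rewrite tW0' mulr0.
  have tWp : 0 < tW by rewrite lt_neqAle eq_sym tWn0 tW0.
  rewrite -ler_pdivrMr // mulrC; apply: theta_ge.
  exists (fun a b => B (inl (inr a)) (inl (inr b)) / tW); split.
  + split => [a b|x]; first by rewrite sB.
    have := qf_ge0 pB (\sum_a sc (x a) (dl R (inl (inr a) : T))).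
    rewrite /qf bil_wsums // => h.
    rewrite (eq_bigr (fun a => \sum_b x a * B (inl (inr a)) (inl (inr b)) * x b * tW^-1)).
      rewrite (_ : \sum_a _ = (\sum_a \sum_b x a * B (inl (inr a)) (inl (inr b)) * x b) * tW^-1).
        by apply: mulr_ge0 => //; rewrite invr_ge0 ltW.
      by rewrite mulr_suml; apply: eq_bigr => a _; rewrite mulr_suml.
    by move=> a _; apply: eq_bigr => b _; rewrite mulrA mulrAC.
  + by rewrite -mulr_suml divff // gt_eqF.
  + by move=> a b eab; rewrite z ?mul0r // hE2.
  + by rewrite qWE mulrC mulr_suml; apply: eq_bigr => a _; rewrite mulr_suml.
set P := fun a b => r (inl (inl a)) (inr b).
set S := [set p : V1 * V1 | P p.1 p.2].
have toPair (M : zmodType) (G : V1 -> V1 -> M) :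
    \sum_(p in S) G p.1 p.2 = \sum_a \sum_(b | P a b) G a b.
  by rewrite -pair_dep; apply: eq_bigl => p; rewrite /S inE.
pose f := fun p : V1 * V1 => dl R (inl (inl p.1) : T) + dl R (inr p.2 : T).
have sumf : \sum_(p in S) f p = (X + Y) *+ k.
  rewrite big_split /= (toPair _ (fun a b => dl R (inl (inl a) : T)))
     (toPair _ (fun a b => dl R (inr b : T))) [X in _ + X]exch_dep mulrnDl /X /Y -!sumrMnl.
  congr (_ + _); apply: eq_bigr => a _.
    by rewrite (sum_constP (P a)) cR.
  by rewrite (sum_constP (fun x => P x a)) cL.
have sumq : \sum_(p in S) qf B (f p) = (tX + tY) *+ k.
  rewrite (eq_bigr (fun p => B (inl (inl p.1)) (inl (inl p.1)) + B (inr p.2) (inr p.2))); last first.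
    move=> p; rewrite /S inE => Pp; rewrite /f (qfD sB) !qf_dl bil_dl (z _ _ Pp); lra.
  rewrite big_split /= (toPair _ (fun a b => B (inl (inl a)) (inl (inl a))))
     (toPair _ (fun a b => B (inr b) (inr b))) [X in _ + X]exch_dep mulrnDl /tX /tY -!sumrMnl.
  congr (_ + _); apply: eq_bigr => a _.
    by rewrite (sum_constP (P a)) cR.
  by rewrite (sum_constP (fun x => P x a)) cL.
have cardS : (#|S|%:R : R) = n * k%:R.
  rewrite -sumr_const (toPair _ (fun _ _ => (1:R))).
  rewrite (eq_bigr (fun _ => k%:R)); last by move=> a _; rewrite (sum_constP (P a)) cR.
  by rewrite sumr_const /n mulr_natl.
have hc := conv_fin sB pB (fun p => p \in S) f.
rewrite sumf sumq (qf_mulrn sB) (_ : #|_| = #|S|) in hc; last by apply: eq_card.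
rewrite cardS in hc.
have kp : 0 < k%:R ^+ 2 :> R by rewrite exprn_gt0 // ltr0n.
have hXY : qf B (X + Y) <= n * (tX + tY).
  rewrite -(ler_pM2l kp); apply: (le_trans hc); rewrite -mulr_natr; rewrite le_eqVlt; apply/orP; left; apply/eqP; ring.
have hYW := cs2 sB pB (c := m / n) Y W.
have mn : 0 < m / n by apply: divr_gt0 => //; lra.
have {hYW} hYW := hYW mn.
have h1 : (m / n) * qf B Y <= m * tY.
  apply: le_trans (_ : m / n * (n * tY) <= _); first by rewrite ler_pM2l.
  rewrite le_eqVlt; apply/orP; left; apply/eqP; field; lra.
have h2 : qf B W / (m / n) <= n * tW.
  rewrite invf_div; apply: le_trans (_ : m * tW * (n / m) <= _).
    by rewrite ler_pM2r // divr_gt0 //; lra.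
  rewrite le_eqVlt; apply/orP; left; apply/eqP; field; lra.
rewrite (val_ones B) onesE (qfD sB) bilDl bXW add0r.
have : 0 <= m * tX by apply: mulr_ge0 => //; lra.
have e1 : n * tX + n * tW + n * tY = n by rewrite -!mulrDr trE mulr1.
have e2' : m * tX + m * tW + m * tY = m by rewrite -!mulrDr trE mulr1.
nra.
Qed.

End G.

Lemma sum_prod' (R : realType) (I J : finType) (F : I -> J -> R) (f : I -> R) (g : J -> R) (c : R) :
  (forall a b, F a b = f a * g b * c) ->
  \sum_a \sum_b F a b = c * (\sum_a f a) * (\sum_b g b).
Proof.
move=> h; rewrite -sum_prod; apply: eq_bigr => a _; apply: eq_bigr => b _; exact: h.
Qed.

Lemma sum_ones (R : realType) (I : finType) : \sum_(i : I) (1 : R) = #|I|%:R.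
Proof. by rewrite sumr_const. Qed.

Section L.
Variables (R : realType) (V1 V2 : finType).
Local Notation T := ((V1 + V2) + V1)%type.

Definition Blow (n t : R) (B2 : V2 -> V2 -> R) (x y : T) : R :=
  match x, y with
  | inr _, inr _ => 1 / (n + t)
  | inr _, inl (inr b) => (\sum_c B2 b c) / (n + t)
  | inl (inr a), inr _ => (\sum_c B2 a c) / (n + t)
  | inl (inr a), inl (inr b) => t * B2 a b / (n + t)
  | _, _ => 0
  end.

Lemma quad_Blow n t B2 (x : T -> R) :
  \sum_u \sum_v x u * Blow n t B2 u v * x v =
  let S := \sum_i x (inr i) in
  let C := \sum_a x (inl (inr a)) * \sum_b B2 a b in
  let Q := \sum_a \sum_b x (inl (inr a)) * B2 a b * x (inl (inr b)) in
  (S ^+ 2 + 2 * S * C + t * Q) / (n + t).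
Proof.
under eq_bigr do rewrite sumT3.
rewrite sumT3 /=.
rewrite [X in X + _ + _ = _]big1; last first.
  by move=> i _; rewrite !big1 ?addr0 // => j _; rewrite mulr0 mul0r.
rewrite [X in _ + X + _ = _](eq_bigr (fun a => \sum_b x (inl (inr a)) * (t * B2 a b / (n + t)) * x (inl (inr b))
   + \sum_i x (inl (inr a)) * ((\sum_c B2 a c) / (n + t)) * x (inr i))); last first.
  by move=> a _; rewrite big1 ?add0r // => i _; rewrite mulr0 mul0r.
rewrite [X in _ + X = _](eq_bigr (fun i => \sum_a x (inr i) * ((\sum_c B2 a c) / (n + t)) * x (inl (inr a))
   + \sum_j x (inr i) * (1 / (n + t)) * x (inr j))); last first.
  by move=> a _; rewrite big1 ?add0r // => i _; rewrite mulr0 mul0r.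
rewrite add0r !big_split /=.
rewrite (sum_prod' (f := fun a => x (inl (inr a)) * \sum_c B2 a c) (g := fun i => x (inr i)) (c := 1 / (n + t))); last by move=> a b /=; ring.
rewrite (sum_prod' (g := fun a => x (inl (inr a)) * \sum_c B2 a c) (f := fun i => x (inr i)) (c := 1 / (n + t))); last by move=> a b /=; ring.
rewrite (sum_prod' (g := fun i => x (inr i)) (f := fun i => x (inr i)) (c := 1 / (n + t))); last by move=> a b /=; ring.
set S := \sum_i x (inr i).
set C := \sum_a x (inl (inr a)) * \sum_b B2 a b.
set Q := \sum_a \sum_b x (inl (inr a)) * B2 a b * x (inl (inr b)).
rewrite (_ : \sum_a \sum_b _ = t / (n + t) * Q).
  ring.
rewrite /Q mulr_sumr; apply: eq_bigr => a _; rewrite mulr_sumr; apply: eq_bigr => b _; set d := (n + t)^-1; ring.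
Qed.

Lemma theta_lower (r : rel T) (e2 : rel V2) :
 (forall i j, r (inr i) (inr j) = false) ->
 (forall i a, r (inr i) (inl (inr a)) = false) ->
 (forall a i, r (inl (inr a)) (inr i) = false) ->
 (forall a b, r (inl (inr a)) (inl (inr b)) = e2 a b) ->
 forall t, @theta_values R V2 e2 t -> 0 < t -> @theta_values R T r (#|V1|%:R + t).
Proof.
move=> h1 h2 h3 h4 t [B2 [[sB2 pB2] tr2 z2 tE]] tp.
set n : R := #|V1|%:R.
have n0 : 0 <= n by rewrite ler0n.
have ntp : 0 < n + t by lra.
have ntz : n + t != 0 by rewrite gt_eqF.
have qone : qf B2 (ones R V2) = t by rewrite -val_ones.
exists (Blow n t B2); split.
- split.
  + by move=> [[i|a]|i] [[j|b]|j] //=; rewrite sB2.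
  + move=> x; rewrite quad_Blow /=; apply: divr_ge0; last exact: ltW.
    set xv : {ffun V2 -> R} := [ffun a => x (inl (inr a))].
    have cs := @cs_bil R V2 B2 sB2 pB2 xv (ones R V2) ltac:(by rewrite qone).
    rewrite qone in cs.
    have eC : bil B2 xv (ones R V2) = \sum_a x (inl (inr a)) * \sum_b B2 a b.
      rewrite /bil; apply: eq_bigr => a _; rewrite ffunE mulr_sumr; apply: eq_bigr => b _.
      by rewrite ffunE mulr1.
    have eQ : qf B2 xv = \sum_a \sum_b x (inl (inr a)) * B2 a b * x (inl (inr b)).
      by rewrite /qf /bil; apply: eq_bigr => a _; apply: eq_bigr => b _; rewrite !ffunE.
    rewrite eC eQ in cs.
    set S := \sum_i x (inr i) in cs *.
    set C := \sum_a x (inl (inr a)) * \sum_b B2 a b in cs *.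
    set Q := \sum_a \sum_b x (inl (inr a)) * B2 a b * x (inl (inr b)) in cs *.
    have h := sqr_ge0 (S + C); rewrite sqrrD in h; nra.
- rewrite sumT3 /= big1 // add0r -mulr_suml -mulr_sumr tr2 sumr_const -mulr_natl -/n.
  by field.
- move=> [[i|a]|i] [[j|b]|j] //=; rewrite ?h1 ?h2 ?h3 ?h4 // => eab.
  by rewrite z2 // mulr0 mul0r.
- have := quad_Blow n t B2 (fun _ => 1).
  rewrite (eq_bigr (fun u => \sum_v Blow n t B2 u v)); last first.
    by move=> u _; apply: eq_bigr => v _; rewrite mul1r mulr1.
  move=> -> /=; rewrite sum_ones -/n.
  have eQ : \sum_a \sum_b 1 * B2 a b * 1 = t.
    by rewrite tE; apply: eq_bigr => a _; apply: eq_bigr => b _; rewrite mul1r mulr1.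
  have eC : \sum_a 1 * \sum_b B2 a b = t by rewrite tE; apply: eq_bigr => a _; rewrite mul1r.
  rewrite eQ eC; field; exact: ntz.
Qed.
End L.

Lemma alpha_attained (V : finType) (e : rel V) :
  {I | independent e I & alpha e = #|I|}.
Proof.
rewrite /alpha; apply: eq_bigmax_cond; apply/card_gt0P; exists (finset.set0 : {set V}).
by rewrite unfold_in /independent; apply/forall_inP => u; rewrite inE.
Qed.

Section M.
Variables (R : realType) (V1 V2 : finType).
Local Notation T := ((V1 + V2) + V1)%type.

Lemma alpha_lower (r : rel T) (e2 : rel V2) :
 (forall i j, r (inr i) (inr j) = false) ->
 (forall i a, r (inr i) (inl (inr a)) = false) ->
 (forall a i, r (inl (inr a)) (inr i) = false) ->
 (forall a b, r (inl (inr a)) (inl (inr b)) = e2 a b) ->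
 (#|V1| + alpha e2 <= alpha r)%N.
Proof.
move=> h1 h2 h3 h4.
have [I2 iI2 aE] := alpha_attained e2.
pose S : {set T} := [set x | match x with inr _ => true | inl (inr a) => a \in I2 | _ => false end].
have iS : independent r S.
  apply/forall_inP => u; rewrite inE => uS; apply/forall_inP => v; rewrite inE => vS.
  case: u uS => [[i|a]|i] //= uS; case: v vS => [[j|b]|j] //= vS; rewrite ?h1 ?h2 ?h3 ?h4 //.
  by move: iI2 => /forall_inP/(_ a uS)/forall_inP/(_ b vS).
have cS : #|S| = (#|V1| + #|I2|)%N.
  rewrite -sum1_card big_sumType big_sumType /=.
  have e1 : (\sum_(i | inl (inl i) \in S) 1 = 0)%N by rewrite big_pred0 // => i; rewrite inE.
  have e2' : (\sum_(a | inl (inr a) \in S) 1 = #|I2|)%N.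
    by rewrite -sum1_card; apply: eq_bigl => a; rewrite inE.
  have e3 : (\sum_(i | inr i \in S) 1 = #|V1|)%N.
    by rewrite -cardsT -sum1_card; apply: eq_bigl => i; rewrite !inE.
  by rewrite e1 e2' e3 add0n addnC.
rewrite aE -cS; exact: (@leq_bigmax_cond _ (fun S => independent r S) (fun S => #|S|) S).
Qed.

Lemma theta_eq (r : rel T) (e2 : rel V2) (k : nat) :
 (0 < k)%N -> (0 < #|V1|)%N -> (0 < #|V2|)%N -> irreflexive e2 -> irreflexive r ->
 (forall i a, r (inl (inl i)) (inl (inr a))) ->
 (forall a b, r (inl (inr a)) (inl (inr b)) = e2 a b) ->
 (forall i, #|[set j | r (inl (inl i)) (inr j)]| = k) ->
 (forall j, #|[set i | r (inl (inl i)) (inr j)]| = k) ->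
 (forall i j, r (inr i) (inr j) = false) ->
 (forall i a, r (inr i) (inl (inr a)) = false) ->
 (forall a i, r (inl (inr a)) (inr i) = false) ->
 theta R r = #|V1|%:R + theta R e2.
Proof.
move=> k0 n10 n20 irr2 irr hX hE cR cL l1 l2 l3.
have [i0 _] := card_gt0P n10.
have v1 : @theta_values R _ r 1.
  by apply: vals_id => //; apply/card_gt0P; exists (inr i0).
apply/le_anti/andP; split.
  apply: theta_le; first by exists 1.
  exact: (theta_upper k0 n10 n20 irr2 hX hE cR cL).
have hn1 : #|V1|%:R + 1 <= theta R r.
  by apply: theta_ge; apply: (theta_lower l1 l2 l3 hE) => //; exact: vals_id.
rewrite -lerBrDl; apply: theta_le; first by exists 1; exact: vals_id.
move=> t ht; case: (ltrP 0 t) => tp.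
  have := theta_ge (theta_lower l1 l2 l3 hE ht tp); lra.
lra.
Qed.

Lemma alpha_eq (r : rel T) (e2 : rel V2) :
 (0 < #|V1|)%N -> irreflexive r ->
 (forall i j, r (inr i) (inr j) = false) ->
 (forall i a, r (inr i) (inl (inr a)) = false) ->
 (forall a i, r (inl (inr a)) (inr i) = false) ->
 (forall a b, r (inl (inr a)) (inl (inr b)) = e2 a b) ->
 theta R r = #|V1|%:R + theta R e2 -> (alpha e2)%:R = theta R e2 ->
 alpha r = (#|V1| + alpha e2)%N.
Proof.
move=> nT irr l1 l2 l3 hE th ha.
apply/eqP; rewrite eqn_leq (alpha_lower l1 l2 l3 hE) andbT.
rewrite -(ler_nat R) natrD ha -th; apply: alpha_le_theta => //.
by have [i0 _] := card_gt0P nT; apply/card_gt0P; exists (inr i0).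
Qed.

End M.

Section CS.
Local Open Scope classical_set_scope.
Lemma card_cset (V : finType) (e : rel V) v :
  #|[set u | e v u]| = #|finset (fun u => e v u)|.
Proof.
apply: eq_card => j; rewrite finset.inE.
by apply/idP/idP; rewrite in_setE.
Qed.
End CS.

Unset Implicit Arguments.

Theorem mainTheorem6 (R : realType) (V1 V2 : finType)
  (e1 : rel V1) (e2 : rel V2) :
  simple_graph e1 -> simple_graph e2 ->
  noncomplete e1 -> noncomplete e2 ->
  has_edge e1 -> has_edge e2 ->
  regular e1 ->
  [/\ theta R (NS_rel e1 e2) = #|V1|%:R + theta R e2,
      theta R (NNS_rel e1 e2) = #|V1|%:R + theta R e2
    & ((alpha e2)%:R = theta R e2 ->
       alpha (NS_rel e1 e2) = (#|V1| + alpha e2)%N /\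
       alpha (NNS_rel e1 e2) = (#|V1| + alpha e2)%N)].
Proof.
move=> [sym1 irr1] [sym2 irr2] [u [v [uv nuv]]] _ [a [b eab]] [c [d ecd]] [k hk].
have {}hk w : #|finset (fun u => e1 w u)| = k by rewrite -card_cset hk.
have n10 : (0 < #|V1|)%N by apply/card_gt0P; exists a.
have n20 : (0 < #|V2|)%N by apply/card_gt0P; exists c.
have k0 : (0 < k)%N by rewrite -(hk a); apply/card_gt0P; exists b; rewrite inE.
have irrNS : irreflexive (NS_rel e1 e2) by move=> [[i|i]|i] /=; rewrite ?irr1 ?irr2.
have irrNNS : irreflexive (NNS_rel e1 e2) by move=> [[i|i]|i] /=; rewrite ?irr1 ?irr2.
have cR1 : forall i, #|[set j | NS_rel e1 e2 (inl (inl i)) (inr j)]| = k.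
  by move=> i; rewrite -(hk i); apply: eq_card => j; rewrite !inE /= sym1.
have cL1 : forall j, #|[set i | NS_rel e1 e2 (inl (inl i)) (inr j)]| = k.
  by move=> j; rewrite -(hk j); apply: eq_card => i; rewrite !inE.
have thNS : theta R (NS_rel e1 e2) = #|V1|%:R + theta R e2.
  by apply: (theta_eq R k0 n10 n20 irr2 irrNS).
set k' := (#|V1| - k.+1)%N.
have setE i : [set j | NNS_rel e1 e2 (inl (inl i)) (inr j)] = ~: (i |: [set w | e1 i w]).
  by apply/setP => j; rewrite !inE /= negb_or sym1.
have cardE i : #|~: (i |: [set w | e1 i w])| = k'.
  have := cardsC (i |: [set w | e1 i w]).
  rewrite cardsU1 inE irr1 hk /k' => <-.
  by rewrite addKn.
have cR2 : forall i, #|[set j | NNS_rel e1 e2 (inl (inl i)) (inr j)]| = k'.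
  by move=> i; rewrite setE cardE.
have cL2 : forall j, #|[set i | NNS_rel e1 e2 (inl (inl i)) (inr j)]| = k'.
  move=> j; rewrite -(cardE j); apply: eq_card => i; rewrite !inE /= negb_or eq_sym.
  by rewrite sym1.
have k'0 : (0 < k')%N.
  rewrite -(cR2 u); apply/card_gt0P; exists v; rewrite inE /= eq_sym uv /=.
  by rewrite sym1.
have thNNS : theta R (NNS_rel e1 e2) = #|V1|%:R + theta R e2.
  by apply: (theta_eq R k'0 n10 n20 irr2 irrNNS).
split => // ha; split.
  by apply: (alpha_eq (R:=R) n10 irrNS).
by apply: (alpha_eq (R:=R) n10 irrNNS).
Qed.
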